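(* Let $\mathcal{F}$ be a Furstenberg family. Every dynamical system $(X,T)$ is dynamically compact with respect to $\mathcal{F}$ if and only if $\mathcal{F}$ has the finite intersection property.
   Context: A dynamical system $(X,T)$ consists of a compact metric space $X$ with more than one point and without isolated points, and a continuous surjection $T:X\to X$. A (Furstenberg) family is a collection $\mathcal{F}$ of subsets of $\mathbb{Z}_+=\{0,1,2,\dots\}$ that is hereditary upward ($F_1\subset F_2$, $F_1\in\mathcal{F}$ imply $F_2\in\mathcal{F}$). For $F\subset\mathbb{Z}_+$ and $x\in X$ let $T^Fx=\{T^ix:i\in F\}$. The $\omega_{\mathcal{F}}$-limit set of $x$ is $\omega_{\mathcal{F}}(x)=\bigcap_{F\in\mathcal{F}}\overline{T^Fx}$. The system $(X,T)$ is dynamically compact with respect to $\mathcal{F}$ if $\omega_{\mathcal{F}}(x)\neq\varnothing$ for all $x\in X$. $\mathcal{F}$ has the finite intersection property if the intersection of any finitely many elements of $\mathcal{F}$ is nonempty. *)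

(* Defs.v *)
From HB Require Import structures.
From mathcomp Require Import all_boot all_order all_algebra.
From mathcomp Require Import all_classical all_reals all_analysis.
From mathcomp Require Import Rstruct Rstruct_topology.
Set Implicit Arguments. Unset Strict Implicit. Unset Printing Implicit Defensive.
Import Order.TTheory GRing.Theory Num.Theory.
Local Open Scope classical_set_scope.

Definition furstenberg_family (Fam : set (set nat)) : Prop :=
  forall A B : set nat, A `<=` B -> Fam A -> Fam B.

Definition finite_intersection_property (Fam : set (set nat)) : Prop :=
  forall s : seq (set nat), (forall A, A \in s -> Fam A) ->
    exists k : nat, forall A, A \in s -> A k.

Definition dynamical_system (X : metricType Rdefinitions.R) (T : X -> X) : Prop :=
  [/\ compact [set: X],
      (exists x y : X, x <> y),
      (forall x : X, ~ open [set x]),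
      continuous T
    & forall y : X, exists x : X, T x = y].

Definition orbit_along {X : Type} (T : X -> X) (F : set nat) (x : X) : set X :=
  (fun i => iter i T x) @` F.

Definition omega_fam {X : topologicalType} (T : X -> X) (Fam : set (set nat))
  (x : X) : set X :=
  \bigcap_(F in Fam) closure (orbit_along T F x).

Definition dynamically_compact {X : topologicalType} (T : X -> X)
  (Fam : set (set nat)) : Prop :=
  forall x : X, omega_fam T Fam x !=set0.

(* Main.v *)
Require Import Defs.
From HB Require Import structures.
From mathcomp Require Import all_boot all_order all_algebra.
From mathcomp Require Import all_classical all_reals all_analysis.
From mathcomp Require Import Rstruct Rstruct_topology.
Import Order.TTheory GRing.Theory Num.Theory.
Local Open Scope classical_set_scope.

Record Cn := MkCn { cv :> nat -> bool }.
HB.instance Definition _ := gen_eqMixin Cn.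
HB.instance Definition _ := gen_choiceMixin Cn.

Lemma Cn_ext (x y : Cn) : (forall j, x j = y j) -> x = y.
Proof. by case: x; case: y => f g H; congr MkCn; apply: funext => j; apply: H. Qed.

Definition fd (x y : Cn) : nat :=
  match pselect (exists j, x j != y j) with
  | left P => @ex_minn (fun j => x j != y j) P
  | right _ => 0%N end.

Lemma fdP (x y : Cn) : x <> y ->
  x (fd x y) != y (fd x y) /\ forall j, (j < fd x y)%N -> x j = y j.
Proof.
move=> xy; have ex : exists j, x j != y j.
  apply: contrapT => nex; apply: xy; apply: Cn_ext => j.
  by apply/eqP; apply: contrapT => /negP H; apply: nex; exists j.
rewrite /fd; case: pselect => // P.
case: ex_minnP => m Hm Hmin; split => // j jm.
apply/eqP; apply: contrapT => /negP H.
by have := Hmin j H; rewrite leqNgt jm.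
Qed.

Arguments fdP {x y}.

Lemma fd_gt (x y : Cn) N : x <> y -> (forall j, (j <= N)%N -> x j = y j) ->
  (N < fd x y)%N.
Proof.
move=> xy H; have [H1 _] := fdP xy; rewrite ltnNge; apply/negP => le.
by move: H1; rewrite H // eqxx.
Qed.

Lemma fdC (x y : Cn) : fd x y = fd y x.
Proof.
case: (pselect (x = y)) => [->//|xy].
have yx : y <> x by move=> e; apply: xy.
have [a1 a2] := fdP xy; have [b1 b2] := fdP yx.
apply/eqP; rewrite eqn_leq; apply/andP; split; rewrite leqNgt; apply/negP => lt.
  by move: b1; rewrite a2 // eqxx.
by move: a1; rewrite b2 // eqxx.
Qed.

Definition ee (m : nat) : Rdefinitions.R := ((2 : Rdefinitions.R) ^+ m)^-1%R.

Lemma ee_gt0 m : (0 < ee m)%R.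
Proof. by rewrite /ee invr_gt0 exprn_gt0. Qed.

Lemma ee_le m n : (m <= n)%N -> (ee n <= ee m)%R.
Proof.
move=> mn; rewrite /ee lef_pV2 ?posrE ?exprn_gt0 //.
by rewrite ler_eXn2l // ltr1n.
Qed.

Lemma ee_lt m n : (m < n)%N -> (ee n < ee m)%R.
Proof.
move=> mn; rewrite /ee ltf_pV2 ?posrE ?exprn_gt0 //.
by rewrite ltr_eXn2l // ltr1n.
Qed.

Definition cdist (x y : Cn) : Rdefinitions.R :=
  if x == y then 0%R else ee (fd x y).

Lemma cdistxx x : cdist x x = 0%R.
Proof. by rewrite /cdist eqxx. Qed.

Lemma cdist_pos x y : cdist x y = 0%R -> x = y.
Proof.
rewrite /cdist; case: eqP => // nxy H.
by have := ee_gt0 (fd x y); rewrite H ltxx.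
Qed.

Lemma cdist_sym x y : cdist x y = cdist y x.
Proof.
rewrite /cdist fdC eq_sym //.
Qed.

Lemma cdist_ge0 x y : (0 <= cdist x y)%R.
Proof. rewrite /cdist; case: eqP => // _; exact/ltW/ee_gt0. Qed.

Lemma cdist_tri y x z : (cdist x z <= cdist x y + cdist y z)%R.
Proof.
case: (pselect (x = z)) => [->|xz]; first by rewrite cdistxx addr_ge0 // cdist_ge0.
case: (pselect (x = y)) => [<-|xy]; first by rewrite cdistxx add0r.
case: (pselect (y = z)) => [->|yz]; first by rewrite cdistxx addr0.
rewrite /cdist; case: eqP => // _; case: eqP => // _; case: eqP => // _.
have [_ h1] := fdP xy; have [_ h2] := fdP yz.
have le : (minn (fd x y) (fd y z) <= fd x z)%N.
  rewrite leqNgt; apply/negP => lt.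
  have [h3 _] := fdP xz; move: h3.
  rewrite h1; last by apply: (leq_trans lt); rewrite geq_minl.
  rewrite h2; last by apply: (leq_trans lt); rewrite geq_minr.
  by rewrite eqxx.

apply: (@le_trans _ _ (ee (minn (fd x y) (fd y z)))); first exact: ee_le.
case: (leqP (fd x y) (fd y z)) => h.
  rewrite lerDl; exact/ltW/ee_gt0.
rewrite lerDr; exact/ltW/ee_gt0.
Qed.

HB.instance Definition _ := @isMetric.Build Rdefinitions.R Cn cdist
  cdistxx cdist_pos cdist_sym cdist_tri.

Lemma ball_agree (x z : Cn) N : ball x (ee N) z -> forall j, (j <= N)%N -> x j = z j.
Proof.
rewrite ballEmdist /= /mdist /= /cdist; case: eqP => [->//|xz] H j jN.
have [_ h] := fdP xz; apply: h; apply: (leq_ltn_trans jN).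
rewrite ltnNge; apply/negP => le.
by have := @ee_le _ _ le; rewrite leNgt H.
Qed.

Lemma agree_ball (x z : Cn) N : (forall j, (j <= N)%N -> x j = z j) -> ball x (ee N) z.
Proof.
move=> H; rewrite ballEmdist /= /mdist /= /cdist; case: eqP => [_|xz]; first exact: ee_gt0.
exact/ee_lt/fd_gt.
Qed.

Lemma ee_small (r : Rdefinitions.R) : (0 < r)%R -> exists N, (ee N < r)%R.
Proof.
move=> r0; have := near_infty_natSinv_expn_lt (PosNum r0).
move=> [N _ HN]; exists N; have := HN N (leqnn N) => /=.
by rewrite div1r.
Qed.

Arguments ball_agree {x z N}.
Arguments agree_ball {x z N}.
Arguments ee_small {r}.

Definition shiftn (n : nat) (y : Cn) : Cn := MkCn (fun j => y (j + n)%N).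

Lemma shiftn_cont n : continuous (shiftn n).
Proof.
move=> y; apply/(@cvg_ballP _ _ _ (nbhs y) (nbhs_filter y)) => eps eps0.
have [N HN] := ee_small eps0.
apply: filterS (nbhsx_ballx y _ (ee_gt0 (N + n))) => z yz.
apply: (le_ball (ltW HN)); apply: agree_ball => j jN /=.
by apply: (ball_agree yz); rewrite leq_add2r.
Qed.

Lemma nbhs_agree (x : cantor_space) N :
  \forall z \near x, forall j, (j <= N)%N -> x j = z j.
Proof.
have Hj : forall j, \forall z \near x, x j = z j.
  move=> j; have H : nbhs (x j) [set x j] by move=> b /= ->.
  have := @proj_continuous nat (fun _ => bool) j x _ H.
  by apply: filterS => z /= ->.
elim: N => [|N IH].
  by apply: filterS (Hj 0%N) => z H j; rewrite leqn0 => /eqP ->.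
apply: filterS2 IH (Hj N.+1) => z h1 h2 j.
by rewrite leq_eqVlt => /orP [/eqP -> //|]; rewrite ltnS; apply: h1.
Qed.

Lemma Cn_compact : compact [set: Cn].
Proof.
have -> : [set: Cn] = (fun z : cantor_space => MkCn z) @` [set: cantor_space].
  by apply/seteqP; split => // [[f]] _; exists f.
apply: continuous_compact; last exact: cantor_space_compact.
apply: continuous_subspaceT => x; apply/(@cvg_ballP _ _ _ (nbhs x) (nbhs_filter x)) => eps eps0.
have [N HN] := ee_small eps0.
apply: filterS (nbhs_agree x N) => z H; apply: (le_ball (ltW HN)).
exact: agree_ball.
Qed.

Lemma Cn_noiso (x : Cn) : ~ open [set x].
Proof.
rewrite openE => /(_ x erefl) /nbhs_ex [d Hd].
have d0 : (0 < d%:num)%R by [].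
have [N HN] := ee_small d0.
pose z := MkCn (fun j => if j == N.+1 then ~~ x j else x j).
have : [set x] z.
  apply: Hd; apply: (le_ball (ltW HN)); apply: agree_ball => j jN /=.
  by rewrite ifN // neq_ltn ltnS jN.
move=> zx; have := congr1 (fun w : Cn => w N.+1) zx; rewrite /= eqxx.
by case: (x N.+1).
Qed.

Lemma Cn_dyn n : dynamical_system (shiftn n).
Proof.
split.
- exact: Cn_compact.
- exists (MkCn (fun=> true)), (MkCn (fun=> false)) => e.
  by have := congr1 (fun w : Cn => w 0%N) e.
- exact: Cn_noiso.
- exact: shiftn_cont.
- move=> y; exists (MkCn (fun j => if (j < n)%N then false else y (j - n)%N)).
  apply: Cn_ext => j /=; rewrite ltnNge leq_addl /=; congr (y _); by rewrite addnK.
Qed.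

Lemma iter_shiftn n k (x : Cn) j : iter k (shiftn n) x j = x (j + k * n)%N.
Proof.
elim: k j => [|k IH] j /=; first by rewrite mul0n addn0.
by rewrite IH mulSn addnA.
Qed.

Lemma dc_fip (Fam : set (set nat)) :
  (forall (X : metricType Rdefinitions.R) (T : X -> X),
      dynamical_system T -> dynamically_compact T Fam) ->
  finite_intersection_property Fam.
Proof.
move=> H; apply: contrapT => /existsNP [s /not_implyP [sF /forallNP nk]].
have Hc : forall k, exists i, (i < size s)%N /\ ~ nth set0 s i k.
  move=> k; have /existsNP [A /not_implyP [As nAk]] := nk k.
  by exists (index A s); rewrite index_mem nth_index.
pose n := size s.
pose c k := projT1 (cid (Hc k)).
have cP : forall k, (c k < n)%N /\ ~ nth set0 s (c k) k.
  by move=> k; rewrite /c; case: cid.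
have n0 : (0 < n)%N by case: (cP 0%N) => h _; apply: leq_ltn_trans h.
pose x := MkCn (fun j => (j %% n == c (j %/ n))%N).
have orb : forall k j, (j < n)%N -> iter k (shiftn n) x j = (j == c k).
  move=> k j jn; rewrite iter_shiftn /x /= addnC modnMDl modn_small //.
  by rewrite divnMDl // divn_small // addn0.
have [p Hp] := H Cn (shiftn n) (Cn_dyn n) x.
have key : forall i, (i < n)%N ->
    exists k, nth set0 s i k /\ forall j, (j < n)%N -> p j = (j == c k).
  move=> i iN; have Fi : Fam (nth set0 s i) by apply: sF; apply: mem_nth.
  have := Hp _ Fi (ball p (ee n)) (nbhsx_ballx p _ (ee_gt0 n)).
  move=> [z [[k ki <-] pz]]; exists k; split => // j jn.
  by rewrite (ball_agree pz) ?(ltnW jn) // orb.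
have [k0 [_ h0]] := key 0%N n0.
have [c0n _] := cP k0.
have [k1 [h1 h1']] := key (c k0) c0n.
have e1 : p (c k0) = true by rewrite h0 // eqxx.
move: e1; rewrite h1' // => /eqP e.
have [_ nk1] := cP k1; apply: nk1; by rewrite -e.
Qed.
Lemma fip_dc (Fam : set (set nat)) : finite_intersection_property Fam ->
  forall (X : metricType Rdefinitions.R) (T : X -> X),
      dynamical_system T -> dynamically_compact T Fam.
Proof.
move=> fip X T [cpt _ _ _ _] x.
have finIf : finI Fam (fun F => orbit_along T F x).
  move=> D' sD.
  have [k Hk] := fip (finmap.enum_fset D') (fun A AD => (set_mem (sD A AD))).
  exists (iter k T x) => i /= iD; exists k => //; exact: Hk.
case: (pselect (exists F, Fam F)) => [[F0 FF0]|nF].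
  have [|p [_ clp]] := cpt _ (finI_filter finIf).
    by exists (orbit_along T F0 x); [apply: finI_from1|].
  exists p => F FF B nB.
  have := clp (orbit_along T F x) B _ nB; apply.
  by exists (orbit_along T F x); [apply: finI_from1|].
exists x => F FF; case: nF; by exists F.
Qed.

Theorem theorem3p1 (Fam : set (set nat)) :
  furstenberg_family Fam ->
  ((forall (X : metricType Rdefinitions.R) (T : X -> X),
      dynamical_system T -> dynamically_compact T Fam)
   <-> finite_intersection_property Fam).
Proof.
move=> _; split; [exact: dc_fip | exact: fip_dc].
Qed.
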